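(* Let $Z$ be a random variable with values in a Polish space $\mathcal{Z}$ and $\mathbb{F}=(\mathcal{F}_t)_{t\ge0}$ a filtration with $\mathcal{F}_t\subset\sigma(Z)$ for all $t\ge0$. If $\tau$ is an $(\mathbb{F}_+,Z)$-randomized stopping time, then there exists a sequence of $(\mathbb{F},Z)$-randomized stopping times $\tau_n$ such that $(Z,\tau_n)\to(Z,\tau)$ in law in $\mathcal{Z}\times[0,\infty]$.
   Context: A random time is a $[0,\infty]$-valued random variable $\tau$; $\mathcal{F}^\tau_t=\sigma(\{\tau\le s\}:s\le t)$. For a filtration $\mathbb{G}$ with $\mathcal{G}_t\subset\sigma(Z)$, $\tau$ is a $(\mathbb{G},Z)$-randomized stopping time if $\mathcal{F}^\tau_t$ is conditionally independent of $Z$ given $\mathcal{G}_t$ for every $t\ge0$, equivalently $\mathbb{P}(\tau\le t\mid Z)=\mathbb{P}(\tau\le t\mid\mathcal{G}_t)$ a.s. for every $t$. $\mathbb{F}_+=(\mathcal{F}_{t+})$ with $\mathcal{F}_{t+}=\bigcap_{s>t}\mathcal{F}_s$. *)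

(* Defs.v *)
From mathcomp Require Import all_boot all_order all_algebra all_classical all_reals all_analysis measurable_realfun.
Set Implicit Arguments. Unset Strict Implicit. Unset Printing Implicit Defensive.
Import Order.TTheory GRing.Theory Num.Theory numFieldNormedType.Exports.
Local Open Scope classical_set_scope.
Local Open Scope ring_scope.

(* A Polish space: represented as a separable, Hausdorff, complete metric
   space (every Polish space carries such a compatible complete metric, and
   the statement only depends on the topology). *)
Definition polish_space (R : realType) (S : completePseudoMetricType R) : Prop :=
  hausdorff_space S /\ exists D : set S, countable D /\ dense D.

Definition borel_sets (S : topologicalType) : set (set S) := <<s open >>.
Arguments borel_sets S : clear implicits.

Definition sigma_gen (Omega S : Type) (B : set (set S)) (Z : Omega -> S)
  : set (set Omega) := [set A | exists2 C, B C & A = Z @^-1` C].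

Definition measurable_wrt (d : measure_display) (Omega : measurableType d)
  (R : realType) (G : set (set Omega)) (g : Omega -> R) : Prop :=
  forall U : set R, measurable U -> G (g @^-1` U).

Definition is_cond_exp (d : measure_display) (Omega : measurableType d)
  (R : realType) (P : probability Omega R) (G : set (set Omega))
  (X g : Omega -> R) : Prop :=
  [/\ measurable_wrt G g,
      P.-integrable setT (EFin \o g) &
      forall B, G B ->
        (\int[P]_(w in B) (X w)%:E = \int[P]_(w in B) (g w)%:E)%E].

Definition filtration_in (d : measure_display) (Omega : measurableType d)
  (R : realType) (SZ : set (set Omega)) (F : R -> set (set Omega)) : Prop :=
  (forall t, 0 <= t -> sigma_algebra setT (F t)) /\
  (forall s t, 0 <= s -> s <= t -> F s `<=` F t) /\
  (forall t, 0 <= t -> F t `<=` SZ).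

Definition filt_plus (Omega : Type) (R : realType) (F : R -> set (set Omega))
  : R -> set (set Omega) := fun t => [set A | forall s, t < s -> F s A].

Definition random_time (d : measure_display) (Omega : measurableType d)
  (R : realType) (tau : Omega -> \bar R) : Prop :=
  measurable_fun setT tau /\ (forall w, (0 <= tau w)%E).

Definition randomized_stopping_time (d : measure_display)
  (Omega : measurableType d) (R : realType) (P : probability Omega R)
  (SZ : set (set Omega)) (G : R -> set (set Omega)) (tau : Omega -> \bar R)
  : Prop :=
  random_time tau /\
  forall t : R, 0 <= t ->
    forall g1 g2 : Omega -> R,
      is_cond_exp P SZ (\1_[set w | (tau w <= t%:E)%E]) g1 ->
      is_cond_exp P (G t) (\1_[set w | (tau w <= t%:E)%E]) g2 ->
      ae_eq P setT (EFin \o g1) (EFin \o g2).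

Definition cvg_law_pair (d : measure_display) (Omega : measurableType d)
  (R : realType) (P : probability Omega R) (S : topologicalType)
  (Z : Omega -> S) (taun : nat -> Omega -> \bar R) (tau : Omega -> \bar R)
  : Prop :=
  forall f : S * \bar R -> R,
    {within [set p : S * \bar R | (0 <= p.2)%E], continuous f} ->
    (exists M : R, forall p : S * \bar R, (0 <= p.2)%E -> `|f p| <= M) ->
    (fun n => Rintegral P setT (fun w => f (Z w, taun n w)))
      @ \oo --> Rintegral P setT (fun w => f (Z w, tau w)).

(* Main.v *)
Require Import Defs.
From HB Require Import structures.
From mathcomp Require Import lra.
From mathcomp Require Import all_boot all_order all_algebra all_classical all_reals all_analysis measurable_realfun.
Import Order.TTheory GRing.Theory Num.Theory numFieldNormedType.Exports.
Local Open Scope classical_set_scope.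
Local Open Scope ring_scope.
Section condexp.
Context d (Omega : measurableType d) (R : realType) (P : probability Omega R) (G : set (set Omega)).
Hypothesis GS : sigma_algebra setT G.
Hypothesis Gm : G `<=` measurable.

Local Notation T' := (g_sigma_algebraType G).
Definition idG : Omega -> T' := id.

Lemma mGE : (measurable : set (set T')) = G.
Proof. exact: measurable_g_measurableTypeE. Qed.

Lemma mT'm {B : set T'} : measurable B -> d.-measurable (B : set Omega).
Proof. by rewrite mGE; apply: Gm. Qed.

Lemma midG : measurable_fun setT idG.
Proof. by move=> _ B mB; rewrite setTI; apply: mT'm. Qed.

HB.instance Definition _ := isMeasurableFun.Build _ _ _ _ idG midG.

Let mu := distribution P idG.

Lemma mu_fin : fin_num_fun mu.
Proof. exact: fin_num_measure. Qed.

Lemma wrtP (g : Omega -> R) :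
  measurable_wrt G g <-> @measurable_fun _ _ T' R setT g.
Proof.
split => [h _ U mU|h U mU]; first by rewrite setTI mGE; exact: h.
by rewrite -mGE -[X in measurable X]setTI; exact: h.
Qed.

Lemma ge0_int_transfer (h : T' -> \bar R) (E : set T') : measurable E ->
  measurable_fun setT h -> (forall x, (0 <= h x)%E) ->
  (\int[mu]_(x in E) h x = \int[P]_(x in E) h x)%E.
Proof.
move=> mE mh h0; rewrite ge0_integral_pushforward//.
  exact: measurable_funTS.
Qed.

Lemma int_transfer (h : T' -> \bar R) (E : set T') : measurable E ->
  measurable_fun setT h -> P.-integrable E h ->
  (\int[mu]_(x in E) h x = \int[P]_(x in E) h x)%E.
Proof.
move=> mE mh ih; rewrite integral_pushforward//.
Qed.

Lemma int_transfer2 {h : T' -> \bar R} : 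
  measurable_fun setT h -> P.-integrable setT h -> mu.-integrable setT h.
Proof.
move=> mh ih; exact: integrable_pushforward.
Qed.


Lemma cond_exp_unique (X g1 g2 : Omega -> R) :
  is_cond_exp P G X g1 -> is_cond_exp P G X g2 ->
  ae_eq P setT (EFin \o g1) (EFin \o g2).
Proof.
case=> m1 i1 e1 [m2 i2 e2].
have mh1 : @measurable_fun _ _ T' _ setT (EFin \o g1).
  by apply/measurable_EFinP; apply/wrtP.
have mh2 : @measurable_fun _ _ T' _ setT (EFin \o g2).
  by apply/measurable_EFinP; apply/wrtP.
have I1 := int_transfer2 mh1 i1.
have : ae_eq mu setT (EFin \o g1 : T' -> \bar R) (EFin \o g2).
  apply: integral_ae_eq => // E _ mE.
  have mEO := mT'm mE.
  rewrite !int_transfer //; last 2 first.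
  - exact: integrableS i2.
  - exact: integrableS i1.
  have GE : G E by rewrite -mGE.
  by rewrite /= -(e1 _ GE) (e2 _ GE).
move=> [N [mN N0 sub]]; exists N; split => //.
exact: mT'm.
Qed.

Section nu.
Variables (A : set Omega) (mA : measurable A).
Definition nuG (B : set T') : \bar R := P (B `&` A).

Let nuG0 : nuG set0 = 0%E.
Proof. by rewrite /nuG set0I measure0. Qed.
Let nuG_ge0 B : (0 <= nuG B)%E.
Proof. exact: measure_ge0. Qed.
Let nuG_ssa : semi_sigma_additive nuG.
Proof.
move=> F mF tF mUF.
exact (@measure_semi_sigma_additive _ _ _ (mrestr P mA) F (fun i => mT'm (mF i)) tF (mT'm mUF)).
Qed.
HB.instance Definition _ := isMeasure.Build _ _ _ nuG nuG0 nuG_ge0 nuG_ssa.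
Let nuG_fin : fin_num_fun nuG.
Proof.
move=> B mB; rewrite ge0_fin_numE//; apply: (@le_lt_trans _ _ 1%E).
  by rewrite -(probability_setT P); apply: le_measure; rewrite ?inE//;
    apply: measurableI => //; exact: mT'm.
exact: ltry.
Qed.
HB.instance Definition _ := @Measure_isFinite.Build _ T' _ nuG nuG_fin.

Lemma cond_exp_exists : exists g, is_cond_exp P G (\1_A) g.
Proof.
have dom : nuG `<< mu.
  apply/null_content_dominatesP => B mB muB0.
  apply/eqP; rewrite -measure_le0 -muB0 /nuG.
  by apply: le_measure; rewrite ?inE//; [apply: measurableI => //|]; exact: mT'm.
have [f [f0 ffin fi fE]] := radon_nikodym_sigma_finite dom.
have mf := measurable_int _ fi.
exists (fine \o f).
have Ef : EFin \o (fine \o f) = f by apply/funext => x /=; rewrite fineK.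
have mfO : measurable_fun setT (f : Omega -> \bar R).
  exact: (measurableT_comp mf midG).
split.
- by apply/wrtP; apply: measurableT_comp.
- rewrite Ef; apply/integrableP; split => //.
  rewrite -ge0_int_transfer //; first by case/integrableP: fi.
  exact: measurableT_comp.
- move=> B GB.
  have mB : measurable (B : set T') by rewrite mGE.
  rewrite integral_indic //; last exact: mT'm.
  rewrite (_ : (fun w => ((fine \o f) w)%:E) = f); last by [].
  by rewrite -ge0_int_transfer// -fE// /nuG setIC.
Qed.
End nu.
End condexp.

Section rst.
Context d (Omega : measurableType d) (R : realType) (P : probability Omega R).

Lemma cond_exp_zero (G : set (set Omega)) : sigma_algebra setT G ->
  is_cond_exp P G (\1_set0) (fun _ => 0).
Proof.
move=> [G0 GC GU]; split.
- have GT : G setT by rewrite -(setD0 setT); exact: GC.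
  move=> U _; case: (pselect (U 0)) => U0.
    by rewrite (_ : _ @^-1` U = setT) //; apply/seteqP; split.
  by rewrite (_ : _ @^-1` U = set0) //; apply/seteqP; split.
- exact: integrable0.
- by move=> B _; rewrite indic0.
Qed.

Lemma cond_exp_key (G1 G2 G3 : set (set Omega)) (X h g3 g2 : Omega -> R) :
  sigma_algebra setT G2 -> G2 `<=` measurable ->
  G1 `<=` G2 -> G2 `<=` G3 ->
  is_cond_exp P G1 X h -> is_cond_exp P G3 X g3 ->
  ae_eq P setT (EFin \o g3) (EFin \o h) -> is_cond_exp P G2 X g2 ->
  ae_eq P setT (EFin \o g3) (EFin \o g2).
Proof.
move=> S2 m2 s12 s23 [mh ih eh] [m3 i3 e3] e3h c2.
have c2h : is_cond_exp P G2 X h.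
  split => //.
  - by move=> U mU; apply: s12; exact: mh.
  - move=> B GB; rewrite (e3 _ (s23 _ GB)).
    apply: ae_eq_integral => //.
    + exact: m2.
    + exact: measurable_funTS (measurable_int _ i3).
    + exact: measurable_funTS (measurable_int _ ih).
    + move: e3h; apply: filterS => x /= + _; exact.
by apply: ae_eq_trans e3h _; exact: cond_exp_unique c2h c2.
Qed.

Lemma shift_rst (SZ : set (set Omega)) (F : R -> set (set Omega))
  (tau : Omega -> \bar R) (c : R) :
  sigma_algebra setT SZ -> SZ `<=` measurable -> filtration_in SZ F ->
  randomized_stopping_time P SZ (filt_plus F) tau -> 0 < c ->
  randomized_stopping_time P SZ F (fun w => tau w + c%:E)%E.
Proof.
move=> SZs SZm [Fs [Fmono Fsub]] [[mtau tau0] htau] c0.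
split; first split.
- by apply: emeasurable_funD => //; exact: measurable_cst.
- by move=> w; rewrite adde_ge0 // lee_fin ltW.
move=> t t0 g1 g2 c1 c2.
have Ftm : F t `<=` measurable by move=> A /(Fsub _ t0) /SZm.
have [tc|ct] := ltP t c.
  have E : [set w | (tau w + c%:E <= t%:E)%E] = set0.
    apply/seteqP; split => // w /= h.
    have : (c%:E <= t%:E)%E := le_trans (lee_paddl (tau0 w) (lexx c%:E)) h.
    by rewrite lee_fin leNgt tc.
  rewrite E in c1 c2.
  have z1 := @cond_exp_unique _ _ _ P _ SZs SZm _ _ _ c1 (@cond_exp_zero _ SZs).
  have z2 := @cond_exp_unique _ _ _ P _ (Fs t t0) Ftm _ _ _ c2 (@cond_exp_zero _ (Fs t t0)).
  exact: ae_eq_trans z1 (ae_eq_sym z2).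
have E : [set w | (tau w + c%:E <= t%:E)%E] = [set w | (tau w <= (t - c)%:E)%E].
  apply/seteqP; split => w /=.
    by rewrite (_ : t%:E = (t - c)%:E + c%:E)%E ?leeD2rE // -EFinD subrK.
  by rewrite (_ : t%:E = (t - c)%:E + c%:E)%E ?leeD2rE // -EFinD subrK.
rewrite E in c1 c2.
have s0 : 0 <= t - c by rewrite subr_ge0.
set FP := filt_plus F (t - c).
have FPs : sigma_algebra setT FP.
  split.
  - move=> s' ss'; have [] := Fs s' (le_trans s0 (ltW ss')) => //.
  - move=> B hB s' ss'; have [_ C _] := Fs s' (le_trans s0 (ltW ss')).
    exact: C (hB s' ss').
  - move=> B hB s' ss'; have [_ _ U] := Fs s' (le_trans s0 (ltW ss')).
    by apply: U => n; exact: hB n s' ss'.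
have FPm : FP `<=` measurable.
  move=> B hB; apply: SZm; apply: (Fsub (t - c + 1)); first lra.
  by apply: hB; lra.
have FPt : FP `<=` F t by move=> B hB; apply: hB; lra.
have mA : measurable [set w | (tau w <= (t - c)%:E)%E].
  rewrite -[X in measurable X]setTI.
  by apply: measurable_lee => //; exact: measurable_cst.
have [h ch] := @cond_exp_exists _ _ _ P _ FPs FPm _ mA.
have e := htau (t - c) s0 g1 h c1 ch.
exact: cond_exp_key (Fs t t0) Ftm FPt (Fsub t t0) ch c1 e c2.
Qed.
End rst.
Lemma within_cvg {T U : topologicalType} {A : set T} {f : T -> U} {x : T}
  {I : Type} {F : set_system I} {FF : Filter F} {u : I -> T} :
  {within A, continuous f} -> A x -> (forall i, A (u i)) -> u @ F --> x ->
  (f \o u) @ F --> f x.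
Proof.
move=> /subspace_continuousP hf Ax Au ux W /= hW.
have := hf x Ax W hW.
move=> /ux /=.
move=> h; exact: (filterS (fun i (H : A (u i) -> W (f (u i))) => H (Au i)) h).
Qed.

Lemma slice_meas d (Omega : measurableType d) (S : topologicalType) (R : realType)
  (Z : Omega -> S) (f : S * \bar R -> R) (c : \bar R) :
  (forall B, borel_sets S B -> measurable (Z @^-1` B)) ->
  {within [set p : S * \bar R | (0 <= p.2)%E], continuous f} -> (0 <= c)%E ->
  measurable_fun setT (fun w => f (Z w, c)).
Proof.
move=> hZ hf c0.
have cont : continuous (fun s => f (s, c)).
  move=> s; apply: (within_cvg (u := fun s => (s, c)) hf) => //=.
  by apply: cvg_pair => /=; [exact: cvg_id | exact: cvg_cst].
apply: (measurability _ (RGenOpens.measurableE R)).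
move=> _ [_ [a [b ->]] <-]; rewrite setTI.
rewrite (_ : _ @^-1` _ = Z @^-1` ((fun s => f (s, c)) @^-1` `]a, b[%classic)) //.
apply: hZ; apply: sub_sigma_algebra.
move/continuousP: cont; apply.
exact: interval_open.
Qed.

Import HBNNSimple.
Lemma comp_meas d (Omega : measurableType d) (S : topologicalType) (R : realType)
  (Z : Omega -> S) (f : S * \bar R -> R) (sg : Omega -> \bar R) :
  (forall B, borel_sets S B -> measurable (Z @^-1` B)) ->
  {within [set p : S * \bar R | (0 <= p.2)%E], continuous f} ->
  measurable_fun setT sg -> (forall w, (0 <= sg w)%E) ->
  measurable_fun setT (fun w => f (Z w, sg w)).
Proof.
move=> hZ hf ms s0.
pose phi := nnsfun_approx measurableT ms.
refine (@measurable_fun_cvg _ _ _ setT (fun k w => f (Z w, ((phi k : Omega -> R) w)%:E)) (fun w => f (Z w, sg w)) _ _).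
- move=> k _ Y mY; rewrite setTI.
  rewrite (_ : _ @^-1` Y = \bigcup_(y in range (phi k))
     ((phi k) @^-1` [set y] `&` (fun w => f (Z w, y%:E)) @^-1` Y)).
    apply: fin_bigcup_measurable; first exact: fimfunP.
    move=> _ [w _ <-]; apply: measurableI.
      by rewrite -[X in measurable X]setTI; exact: measurable_funP1.
    rewrite -[X in measurable X]setTI; apply: slice_meas => //.
    by rewrite lee_fin fun_ge0.
  apply/seteqP; split.
    by move=> w /= Yw; exists (phi k w) => //; split.
  by move=> w [_ [w' _ <-]] [/= e h]; rewrite /= e.
- move=> w _; apply: (within_cvg (u := fun k => (Z w, (phi k w)%:E)) hf) => //=.
  + by move=> k; rewrite lee_fin fun_ge0.
  + apply: cvg_pair; first exact: cvg_cst.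
    exact: (cvg_nnsfun_approx measurableT ms (fun x _ => s0 x)).
Qed.

Lemma law_shift d (Omega : measurableType d) (R : realType) (P : probability Omega R)
  (S : topologicalType) (Z : Omega -> S) (tau : Omega -> \bar R) :
  (forall B, borel_sets S B -> measurable (Z @^-1` B)) ->
  random_time tau ->
  cvg_law_pair P Z (fun n w => tau w + (harmonic n)%:E)%E tau.
Proof.
move=> hZ [mtau tau0] f hf [M hM].
have taun0 n w : (0 <= tau w + (harmonic n)%:E)%E.
  by rewrite adde_ge0 // lee_fin harmonic_ge0.
have mh : measurable_fun setT (fun w => f (Z w, tau w)) by exact: comp_meas.
have mhn n : measurable_fun setT (fun w => f (Z w, tau w + (harmonic n)%:E)%E).
  apply: comp_meas => //.
  by apply: emeasurable_funD => //; exact: measurable_cst.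
have cv w : (fun n => f (Z w, tau w + (harmonic n)%:E)%E) @ \oo --> f (Z w, tau w).
  have ct : (fun n => tau w + (harmonic n)%:E)%E @ \oo --> tau w.
    have h0 : (tau w +? 0%E)%E by exact: fin_num_adde_defl.
    have h1 := cvgeD h0 (cvg_cst (tau w)) cvge_harmonic.
    rewrite adde0 in h1; exact: h1.
  apply: (within_cvg (u := fun n => (Z w, tau w + (harmonic n)%:E)%E) hf).
  - exact: tau0.
  - by move=> n; exact: taun0.
  by apply: cvg_pair; [exact: cvg_cst | exact: ct].
have ig : P.-integrable setT (EFin \o cst M).
  exact: finite_measure_integrable_cst.
have bd n w : (`|(f (Z w, tau w + (harmonic n)%:E)%E)%:E| <= (EFin \o cst M) w)%E.
  by rewrite /= lee_fin; apply: hM; exact: taun0.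
have ih : P.-integrable setT (fun w => (f (Z w, tau w))%:E).
  apply: (le_integrable measurableT _ _ ig).
    by apply/measurable_EFinP.
  move=> w _ /=; rewrite lee_fin (le_trans (hM (Z w, tau w) (tau0 w)))//.
  exact: ler_norm.
rewrite /Rintegral; apply: fine_cvg; rewrite fineK; last exact: integrable_fin_num.
apply: (dominated_cvg measurableT _ _ _ ig).
- by move=> n; apply/measurable_EFinP.
- by move=> w _; apply: cvg_comp (cv w) _; exact: cvg_id.
- by move=> w _.
- by move=> n w _; exact: bd.
Qed.

Theorem lemma4p6 (R : realType) (d : measure_display) (Omega : measurableType d)
  (P : probability Omega R) (S : completePseudoMetricType R)
  (Z : Omega -> S) (F : R -> set (set Omega)) (tau : Omega -> \bar R) :
  polish_space S ->
  (forall B, borel_sets S B -> measurable (Z @^-1` B)) ->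
  filtration_in (sigma_gen (borel_sets S) Z) F ->
  randomized_stopping_time P (sigma_gen (borel_sets S) Z) (filt_plus F) tau ->
  exists taun : nat -> Omega -> \bar R,
    (forall n, randomized_stopping_time P (sigma_gen (borel_sets S) Z) F (taun n)) /\
    cvg_law_pair P Z taun tau.
Proof.
move=> _ hZ hF htau.
have SZs : sigma_algebra setT (sigma_gen (borel_sets S) Z).
  rewrite (_ : sigma_gen _ _ = preimage_set_system setT Z (borel_sets S)).
    by apply: sigma_algebra_preimage; exact: smallest_sigma_algebra.
  apply/funext => A; apply/propext; split.
    by move=> [C hC ->]; exists C => //; rewrite setTI.
  by move=> [C hC <-]; exists C => //; rewrite setTI.
have SZm : sigma_gen (borel_sets S) Z `<=` measurable.
  by move=> A [C hC ->]; exact: hZ.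
exists (fun n w => tau w + (harmonic n)%:E)%E; split.
  by move=> n; apply: shift_rst => //; exact: harmonic_gt0.
by apply: law_shift => //; exact: htau.1.
Qed.
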